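(* Let $G$ be a connected finite simple graph with $n\ge2$ vertices. Then $$\bigcup_{H}\mathscr{H}_H(G)=\{0,1,\dots,h^+_{K_n}(G)\},$$ where $H$ ranges over all simple graphs on a fixed $n$-element vertex set, and $h^+_{K_n}(G)=\max\mathscr{H}_{K_n}(G)$ (the sum of distances over all pairs of vertices of $G$).
   Context: For finite simple graphs $H,G$ with $|V(H)|=|V(G)|$ and $G$ connected, the $H$-Hamiltonian spectrum of $G$ is $\mathscr{H}_H(G)=\{\sum_{\{x,y\}\in E(H)}\rho_G(f(x),f(y)) : f:V(H)\to V(G)\text{ bijection}\}$, where $\rho_G$ is the graph distance in $G$; $h^+_H(G)=\max\mathscr H_H(G)$. *)

(* Defs.v *)
From mathcomp Require Import all_boot.
Set Implicit Arguments. Unset Strict Implicit. Unset Printing Implicit Defensive.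

Definition simple_graph (T : finType) (e : rel T) : Prop :=
  symmetric e /\ irreflexive e.

Definition connected_graph (T : finType) (e : rel T) : Prop :=
  forall x y : T, connect e x y.

Fixpoint within (T : finType) (e : rel T) (k : nat) (x y : T) : bool :=
  if k is k'.+1 then within e k' x y || [exists z, e x z && within e k' z y]
  else x == y.

(* In a connected graph on #|T| vertices every distance is < #|T|, so the
   search range iota 0 #|T| suffices (returns #|T| if unreachable). *)
Definition gdist (T : finType) (e : rel T) (x y : T) : nat :=
  find (fun k => within e k x y) (iota 0 #|T|).

Definition Hsum (n : nat) (T : finType) (h : rel 'I_n) (e : rel T)
    (f : 'I_n -> T) : nat :=
  \sum_(i : 'I_n) \sum_(j : 'I_n | (i < j) && h i j) gdist e (f i) (f j).

Definition in_Hspectrum (n : nat) (T : finType) (h : rel 'I_n) (e : rel T)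
    (m : nat) : Prop :=
  exists f : 'I_n -> T, bijective f /\ m = Hsum h e f.

(* h^+_H(G) = max of the H-Hamiltonian spectrum: max over injective maps
   V(H) -> V(G), which are exactly the bijections when #|T| = n. *)
Definition hplus (n : nat) (T : finType) (h : rel 'I_n) (e : rel T) : nat :=
  \max_(f : {ffun 'I_n -> T} | injectiveb f) Hsum h e f.

Definition Kn {n : nat} : rel 'I_n := fun i j => i != j.

(* Main.v *)
Require Import Defs.
From mathcomp Require Import all_boot.

Section W.
Variables (T : finType) (e : rel T).

Lemma within_refl k x : within e k x x.
Proof. by elim: k => [|k IH] /=; rewrite ?eqxx ?IH. Qed.

Lemma within_path k x y :
  reflect (exists p, [/\ size p <= k, path e x p & last x p = y]) (within e k x y).
Proof.
apply: (iffP idP).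
  elim: k x => [|k IH] x /=.
    by move/eqP=> ->; exists [::].
  case/orP=> [/IH [p [sp pp lp]]|/existsP [z /andP [exz /IH [p [sp pp lp]]]]].
    by exists p; split=> //; apply: leqW.
  by exists (z :: p); rewrite /= exz.
elim: k x => [|k IH] x [p [sp pp lp]] /=.
  by case: p sp pp lp => //= _ _ ->.
case: p sp pp lp => [|z p] /= sp pp lp.
  by rewrite lp within_refl.
case/andP: pp => exz pp.
apply/orP; right; apply/existsP; exists z; rewrite exz /=.
by apply: IH; exists p.
Qed.

Hypothesis esym : symmetric e.

Lemma within_sym k x y : within e k x y -> within e k y x.
Proof.
case/within_path=> p [sp pp lp]; apply/within_path.
exists (rev (belast x p)); split.
- by rewrite size_rev size_belast.
- by rewrite -lp rev_path; rewrite (@eq_path _ _ e) // => a b; rewrite esym.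
- rewrite -lp.
  have -> : last (last x p) (rev (belast x p)) = last x (last x p :: rev (belast x p)) by [].
  by rewrite -rev_rcons -lastI rev_cons last_rcons.
Qed.

Hypothesis econn : connected_graph e.

Lemma within_mono k x y : within e k x y -> within e k.+1 x y.
Proof. by move=> h /=; rewrite h. Qed.

Lemma has_within x y : has (fun k => within e k x y) (iota 0 #|T|).
Proof.
have /connectP [p pp lp] := econn x y.
move: lp; case: (shortenP pp) => p' pp' up' _ lp'.
apply/hasP; exists (size p').
  rewrite mem_iota /= add0n.
  have := max_card (mem (x :: p')).
  by rewrite (card_uniqP up').
apply/within_path; exists p'; split => //.
Qed.

Lemma gdist_lt x y : gdist e x y < #|T|.
Proof. by rewrite /gdist -[X in _ < X](size_iota 0) -has_find has_within. Qed.

Lemma gdist_within x y : within e (gdist e x y) x y.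
Proof.
have := nth_find 0 (has_within x y).
by rewrite nth_iota ?add0n //; apply: gdist_lt.
Qed.

Lemma gdist_min k x y : k < gdist e x y -> within e k x y = false.
Proof.
move=> hk; have := before_find 0 hk.
rewrite nth_iota ?add0n //; apply: ltn_trans hk (gdist_lt x y).
Qed.

Lemma gdist_le k x y : within e k x y -> gdist e x y <= k.
Proof. by move=> h; rewrite leqNgt; apply/negP => /gdist_min; rewrite h. Qed.

Lemma gdist_sym x y : gdist e x y = gdist e y x.
Proof.
by apply/eqP; rewrite eqn_leq !gdist_le // within_sym // gdist_within.
Qed.

Lemma gdist0 x y : (gdist e x y == 0) = (x == y).
Proof.
apply/idP/idP.
  by move/eqP=> h; have := gdist_within x y; rewrite h.
move/eqP=> ->; rewrite -leqn0; apply: gdist_le; exact: within_refl.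
Qed.

Lemma gdist_step x y d : gdist e x y = d.+1 ->
  exists z, e x z /\ gdist e z y = d.
Proof.
move=> hd; have := gdist_within x y; rewrite hd /= gdist_min ?hd //=.
case/existsP => z /andP [exz wz]; exists z; split => //.
apply/eqP; rewrite eqn_leq gdist_le //= leqNgt; apply/negP => lt.
have := gdist_within z y => w.
have : within e (gdist e z y).+1 x y.
  by rewrite /= ; apply/orP; right; apply/existsP; exists z; rewrite exz w.
by rewrite gdist_min // hd.
Qed.
End W.

Section SS.
Variables (I : finType) (w : I -> nat).

Definition closed_ss (S : {set I}) :=
  forall p, p \in S -> 1 < w p -> exists2 q, q \in S & w q = (w p).-1.

Lemma subset_sum k (S : {set I}) : #|S| <= k -> closed_ss S ->
  forall m, m <= \sum_(p in S) w p -> exists2 A : {set I}, A \subset S & \sum_(p in A) w p = m.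
Proof.
elim: k S => [|k IH] S hS cl m hm.
  move: hS; rewrite leqn0 cards_eq0 => /eqP S0.
  move: hm; rewrite S0 big_set0 leqn0 => /eqP ->.
  by exists set0; rewrite ?sub0set ?big_set0.
have [S0|[x0 x0S]] := set_0Vmem S.
  move: hm; rewrite S0 big_set0 leqn0 => /eqP ->.
  by exists set0; rewrite ?sub0set ?big_set0.
set p0 := [arg max_(p > x0 in S) w p].
have [p0S p0max] : p0 \in S /\ forall q, q \in S -> w q <= w p0.
  by rewrite /p0; case: arg_maxnP.
set S' := S :\ p0.
have hS' : #|S'| <= k by move: hS; rewrite (cardsD1 p0) p0S.
have cl' : closed_ss S'.
  move=> q; rewrite in_setD1 => /andP [qp0 qS] wq.
  have [r rS wr] := cl q qS wq.
  exists r => //; rewrite in_setD1 rS andbT; apply/eqP => rp0.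
  have := p0max q qS; rewrite -rp0 wr; case: (w q) wq => //= a _.
  by rewrite ltnn.
have sS' : S' \subset S by apply: subsetDl.
move: hm; rewrite (big_setD1 _ p0S) => hm.
have [hm'|hm'] := leqP m (\sum_(p in S') w p).
  have [A AS' sA] := IH S' hS' cl' m hm'.
  by exists A => //; apply: subset_trans sS'.
have wp0 : w p0 <= (\sum_(p in S') w p).+1.
  case: (leqP (w p0) 1) => [h|h]; first by apply: leq_trans h _.
  have [r rS wr] := cl p0 p0S h.
  have rS' : r \in S'.
    rewrite in_setD1 rS andbT; apply/eqP => rp0.
    by move: wr; rewrite rp0; case: (w p0) h => // a _ /= /eqP; rewrite eqn_leq ltnn.
  have : w r <= \sum_(p in S') w p by rewrite (big_setD1 _ rS') leq_addr.
  rewrite wr; case: (w p0) h => //= a _ h2; exact: h2.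
have hm2 : m - w p0 <= \sum_(p in S') w p by rewrite leq_subLR.
have [A AS' sA] := IH S' hS' cl' _ hm2.
exists (p0 |: A).
  by rewrite subUset sub1set p0S (subset_trans AS' sS').
rewrite big_setU1 /= ?sA.
  by rewrite subnKC //; apply: leq_trans wp0 hm'.
apply/negP => /(subsetP AS'); by rewrite in_setD1 eqxx.
Qed.
End SS.

Lemma Hsum_pair n (T : finType) (h : rel 'I_n) (e : rel T) (f : 'I_n -> T) :
  Hsum h e f = \sum_(p : 'I_n * 'I_n | (p.1 < p.2) && h p.1 p.2) gdist e (f p.1) (f p.2).
Proof. by rewrite /Hsum pair_big_dep. Qed.

Theorem mainTheorem13 (n : nat) (T : finType) (e : rel T) :
  2 <= n -> #|T| = n -> simple_graph e -> connected_graph e ->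
  forall m : nat,
    (exists h : rel 'I_n, simple_graph h /\ in_Hspectrum h e m)
    <-> m <= hplus (@Kn n) e.
Proof.
move=> n2 cT [esy eirr] con m; split.
  case=> h [[hsy hirr] [f [fb ->]]].
  apply: (@leq_trans (Hsum Kn e f)).
    rewrite /Hsum; apply: leq_sum => i _.
    rewrite [X in X <= _]big_mkcond [X in _ <= X]big_mkcond /=.
    apply: leq_sum => j _.
    case: (ltnP i j) => //= lij; rewrite /Kn; have -> : (i != j) by rewrite neq_ltn lij.
    by case: (h i j).
  have -> : Hsum Kn e f = Hsum Kn e (finfun f).
    by rewrite /Hsum; apply: eq_bigr => i _; apply: eq_bigr => j _; rewrite !ffunE.
  apply: leq_bigmax_cond; apply/injectiveP => a b; rewrite !ffunE.
  exact: bij_inj.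
move=> hm.
have cT' : n = #|T| by [].
pose g0 : {ffun 'I_n -> T} := [ffun i => enum_val (cast_ord cT' i)].
have g0i : injectiveb g0.
  apply/injectiveP => a b; rewrite !ffunE => /enum_val_inj /(congr1 val) /= ab.
  by apply: val_inj.
move: hm; rewrite /hplus (bigmax_eq_arg _ g0i).
case: arg_maxnP => // g /injectiveP ginj _.
have gb : bijective g by apply: inj_card_bij => //; rewrite cT card_ord.
set w := fun p : 'I_n * 'I_n => gdist e (g p.1) (g p.2).
set S := [set p : 'I_n * 'I_n | p.1 < p.2].
have HS : Hsum Kn e g = \sum_(p in S) w p.
  rewrite Hsum_pair; apply: eq_bigl => p; rewrite inE /Kn.
  by case: ltnP => //= lp; rewrite neq_ltn lp.
have cl : @closed_ss _ w S.
  move=> [a b]; rewrite inE /= => ab; rewrite /w /= => wp.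
  case E: (gdist e (g a) (g b)) wp => [|d] // wp.
  have [z [ez dz]] := @gdist_step _ _ con _ _ _ E.
  case: gb => ginv gK ginvK.
  have zgb : ginv z != b.
    apply/eqP => zb; move: dz; rewrite -zb ginvK => dz.
    have := gdist0 _ _ con z z; rewrite eqxx dz.
    by case: (d) wp.
  move: zgb; rewrite neq_ltn => /orP [lt|lt].
    by exists (ginv z, b); rewrite ?inE //= /w /= ginvK dz.
  by exists (b, ginv z); rewrite ?inE //= /w /= ginvK (gdist_sym _ _ esy con) dz.
move=> hm0; have hm : m <= \sum_(p in S) w p by rewrite -HS; exact: hm0.
have [A AS sA] := @subset_sum _ w _ S (leqnn _) cl m hm.
exists (fun i j => ((i, j) \in A) || ((j, i) \in A)); split.
  split; first by move=> i j; rewrite orbC.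
  move=> i /=; rewrite orbb; apply/negP => /(subsetP AS).
  by rewrite inE ltnn.
exists g; split => //.
rewrite Hsum_pair -sA; apply: eq_bigl => -[a b] /=.
case iA: ((a, b) \in A).
  by have := subsetP AS _ iA; rewrite inE /= => ->.
case jA: ((b, a) \in A); rewrite ?andbF //.
by have := subsetP AS _ jA; rewrite inE /= => /ltnW; rewrite leqNgt => /negbTE ->.
Qed.
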